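(* For $n\ge2$ and all $P,Q\in\Gamma_n$, $D_{h\Delta}(P\|Q)\le 3D_{hI}(P\|Q)$.
   Context: $\Gamma_n=\{P=(p_1,\dots,p_n): p_i>0,\ \sum p_i=1\}$. $h(P\|Q)=\frac12\sum_{i=1}^n(\sqrt{p_i}-\sqrt{q_i})^2$; $\Delta(P\|Q)=\sum_{i=1}^n\frac{(p_i-q_i)^2}{p_i+q_i}$; $I(P\|Q)=\frac12\Big[\sum_{i=1}^n p_i\ln\frac{2p_i}{p_i+q_i}+\sum_{i=1}^n q_i\ln\frac{2q_i}{p_i+q_i}\Big]$. $D_{h\Delta}=h-\frac14\Delta$, $D_{hI}=h-I$. *)

(* Defs.v *)
From Stdlib Require Import Reals.
Open Scope R_scope.

Fixpoint fsum (n : nat) (f : nat -> R) : R :=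
  match n with
  | O => 0
  | S m => fsum m f + f m
  end.

Definition Gamma (n : nat) (P : nat -> R) : Prop :=
  (forall i, (i < n)%nat -> 0 < P i) /\ fsum n P = 1.

Definition hellinger (n : nat) (P Q : nat -> R) : R :=
  / 2 * fsum n (fun i => (sqrt (P i) - sqrt (Q i)) ^ 2).

Definition triangular (n : nat) (P Q : nat -> R) : R :=
  fsum n (fun i => (P i - Q i) ^ 2 / (P i + Q i)).

Definition jensen_shannon (n : nat) (P Q : nat -> R) : R :=
  / 2 * (fsum n (fun i => P i * ln (2 * P i / (P i + Q i)))
       + fsum n (fun i => Q i * ln (2 * Q i / (P i + Q i)))).

Definition D_hDelta (n : nat) (P Q : nat -> R) : R :=
  hellinger n P Q - / 4 * triangular n P Q.

Definition D_hI (n : nat) (P Q : nat -> R) : R :=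
  hellinger n P Q - jensen_shannon n P Q.

(* Main.v *)
Require Import Defs.
From Stdlib Require Import Reals Lra Psatz.
From Coquelicot Require Import Coquelicot.
Open Scope R_scope.

Definition psi (b a : R) := 2*(a-b)/a + (a*a-b*b)*(a*a+3*(b*b))/(2*((a*a+b*b)*(a*a+b*b))) - 3 * ln (2*(a*a)/(a*a+b*b)).
Definition dpsi (b a : R) := 2*b/(a*a) + 8*a*(b*b*(b*b))/((a*a+b*b)*(a*a+b*b)*(a*a+b*b)) - 6*(b*b)/(a*(a*a+b*b)).

Lemma dpsi_nonneg b a : 0 < a -> 0 < b -> 0 <= dpsi b a.
Proof.
  intros Ha Hb. unfold dpsi.
  assert (Hs : 0 < a*a+b*b) by nra.
  replace (2*b/(a*a) + 8*a*(b*b*(b*b))/((a*a+b*b)*(a*a+b*b)*(a*a+b*b)) - 6*(b*b)/(a*(a*a+b*b)))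
   with (2*b*((a-b)^4*(a*a+a*b+b*b)) / (a*a*((a*a+b*b)*(a*a+b*b)*(a*a+b*b)))) by (field; repeat split; try lra; nra).
  unfold Rdiv; apply Rmult_le_pos.
  - assert (0 <= (a-b)^4) by (replace ((a-b)^4) with (((a-b)^2)^2) by ring; apply pow2_ge_0).
    assert (0 <= a*a+a*b+b*b) by nra. apply Rmult_le_pos; [lra|]. apply Rmult_le_pos; lra.
  - left; apply Rinv_0_lt_compat. repeat apply Rmult_lt_0_compat; lra.
Qed.

Lemma psi_deriv b a : 0 < a -> 0 < b -> is_derive (psi b) a (dpsi b a).
Proof.
  intros Ha Hb. unfold psi, dpsi.
  assert (Hs : 0 < a*a+b*b) by nra.
  auto_derive.
  - repeat split; try lra; try nra.
    apply Rmult_lt_0_compat; [|apply Rinv_0_lt_compat]; nra.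
  - field; repeat split; nra.
Qed.

Lemma cont_of_deriv (f : R -> R) (x l : R) : is_derive f x l -> continuity_pt f x.
Proof. intros H. apply continuity_pt_filterlim. apply (ex_derive_continuous (V:=R_NormedModule)). exists l; exact H. Qed.

Lemma psi_bb b : 0 < b -> psi b b = 0.
Proof. intros Hb. unfold psi.
  replace (2*(b*b)/(b*b+b*b)) with 1 by (field; nra). rewrite ln_1. field; repeat split; nra. Qed.

Lemma psi_sign b a : 0 < a -> 0 < b -> 0 <= psi b a * (a - b).
Proof.
  intros Ha Hb.
  destruct (MVT_gen (psi b) b a (dpsi b)) as [c [Hc E]].
  - intros x Hx. apply psi_deriv; [|lra]. unfold Rmin, Rmax in Hx. destruct (Rle_dec b a); lra.
  - intros x Hx. eapply cont_of_deriv, psi_deriv; [|lra]. unfold Rmin, Rmax in Hx. destruct (Rle_dec b a); lra.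
  - rewrite psi_bb in E by lra.
    assert (0 <= dpsi b c). { apply dpsi_nonneg; [|lra]. unfold Rmin, Rmax in Hc. destruct (Rle_dec b a); lra. }
    replace (psi b a) with (dpsi b c * (a - b)) by lra. rewrite Rmult_assoc; apply Rmult_le_pos; [lra|apply Rle_0_sqr].
Qed.

Definition G (b a : R) := (a-b)^2 + (a*a-b*b)^2/(4*(a*a+b*b)) - 3/2*(a*a*ln(2*(a*a)/(a*a+b*b)) + b*b*ln(2*(b*b)/(a*a+b*b))).

Lemma G_deriv b a : 0 < a -> 0 < b -> is_derive (G b) a (a * psi b a).
Proof.
  intros Ha Hb. unfold G, psi.
  assert (Hs : 0 < a*a+b*b) by nra.
  auto_derive.
  - repeat split; try lra; try nra.
    + apply Rmult_lt_0_compat; [|apply Rinv_0_lt_compat]; nra.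
    + apply Rmult_lt_0_compat; [|apply Rinv_0_lt_compat]; nra.
  - unfold Rdiv; field; repeat split; nra.
Qed.

Lemma G_nonneg b a : 0 < a -> 0 < b -> 0 <= G b a.
Proof.
  intros Ha Hb.
  assert (G b b = 0).
  { unfold G. replace (2*(b*b)/(b*b+b*b)) with 1 by (field; nra). rewrite ln_1. field. nra. }
  destruct (MVT_gen (G b) b a (fun x => x * psi b x)) as [c [Hc E]].
  - intros x Hx. apply G_deriv; [|lra]. unfold Rmin, Rmax in Hx. destruct (Rle_dec b a); lra.
  - intros x Hx. eapply cont_of_deriv, G_deriv; [|lra]. unfold Rmin, Rmax in Hx. destruct (Rle_dec b a); lra.
  - unfold Rmin, Rmax in Hc.
    assert (Hc0 : 0 < c) by (destruct (Rle_dec b a); lra).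
    assert (Hp := psi_sign b c Hc0 Hb).
    destruct (Rtotal_order c b) as [Hlt|[Heq|Hgt]].
    + destruct (Rle_dec b a); [lra|].
      assert (psi b c <= 0).
      { destruct (Rle_dec (psi b c) 0); auto. exfalso.
        assert (psi b c * (b - c) > 0) by (apply Rmult_lt_0_compat; lra). lra. }
      replace (G b a) with (c * (- psi b c) * (b - a)) by lra.
      apply Rmult_le_pos; [apply Rmult_le_pos|]; lra.
    + subst c. rewrite psi_bb in E by lra. lra.
    + destruct (Rle_dec b a); [|lra].
      assert (0 <= psi b c).
      { destruct (Rle_dec 0 (psi b c)); auto. exfalso.
        assert ((- psi b c) * (c - b) > 0) by (apply Rmult_lt_0_compat; lra). lra. }
      replace (G b a) with (c * psi b c * (a - b)) by lra.
      apply Rmult_le_pos; [apply Rmult_le_pos|]; lra.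
Qed.

Lemma fsum_comb n f1 f2 f3 f4 :
  3 * (/2 * fsum n f1 - /2 * (fsum n f3 + fsum n f4)) - (/2 * fsum n f1 - /4 * fsum n f2)
  = fsum n (fun i => f1 i + f2 i / 4 - 3/2 * (f3 i + f4 i)).
Proof. induction n; simpl; [ring|]. rewrite <- IHn. field. Qed.

Lemma fsum_nonneg n f : (forall i, (i < n)%nat -> 0 <= f i) -> 0 <= fsum n f.
Proof. induction n; simpl; intros H; [lra|]. assert (0 <= fsum n f) by (apply IHn; intros; apply H; lia).
  assert (0 <= f n) by (apply H; lia). lra. Qed.

Theorem proposition5p2 (n : nat) (P Q : nat -> R) :
  (2 <= n)%nat -> Gamma n P -> Gamma n Q ->
  D_hDelta n P Q <= 3 * D_hI n P Q.
Proof.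
  intros _ [HP _] [HQ _].
  cut (0 <= 3 * D_hI n P Q - D_hDelta n P Q). { lra. }
  unfold D_hI, D_hDelta, hellinger, triangular, jensen_shannon.
  rewrite fsum_comb. apply fsum_nonneg. intros i Hi.
  specialize (HP i Hi). specialize (HQ i Hi).
  set (p := P i) in *. set (q := Q i) in *.
  assert (Ha : 0 < sqrt p) by (apply sqrt_lt_R0; lra).
  assert (Hb : 0 < sqrt q) by (apply sqrt_lt_R0; lra).
  pose proof (G_nonneg (sqrt q) (sqrt p) Ha Hb) as HG. unfold G in HG.
  rewrite !sqrt_sqrt in HG by lra.
  replace ((p - q) ^ 2 / (p + q) / 4) with ((p - q) ^ 2 / (4 * (p + q))) by (field; lra).
  lra.
Qed.
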